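(* Let $0<\alpha<n$ and $b$ be locally integrable on $\mathbb{Q}_p^n$. If for some $q(\cdot)\in\mathscr{B}(\mathbb{Q}_p^n)$ there is $C>0$ with $$\sup_{\gamma\in\mathbb{Z},x\in\mathbb{Q}_p^n}\frac{\big\|\big(b-|B_\gamma(x)|_h^{-\alpha/n}\mathcal{M}^p_{\alpha,B_\gamma(x)}(b)\big)\chi_{B_\gamma(x)}\big\|_{L^{q(\cdot)}(\mathbb{Q}_p^n)}}{\|\chi_{B_\gamma(x)}\|_{L^{q(\cdot)}(\mathbb{Q}_p^n)}}\le C,$$ then $b\in\mathrm{BMO}(\mathbb{Q}_p^n)$.
   Context: Fix a prime $p$; $\mathbb{Q}_p^n$ with $|x|_p=\max_j|x_j|_p$; balls $B_\gamma(x)=\{y:|y-x|_p\le p^\gamma\}$; Haar measure with $|B_\gamma(x)|_h=p^{n\gamma}$; $\chi_E$ indicator; $f_B=|B|_h^{-1}\int_Bf$. For a fixed ball $B_*$ and $x\in B_*$, $\mathcal{M}^p_{\alpha,B_*}(f)(x)=\sup\{|B_\gamma(x)|_h^{\alpha/n-1}\int_{B_\gamma(x)}|f|:\gamma\in\mathbb{Z},B_\gamma(x)\subset B_*\}$. $\mathrm{BMO}$: locally integrable $b$ with $\sup_{\gamma,x}|B_\gamma(x)|_h^{-1}\int_{B_\gamma(x)}|b-b_{B_\gamma(x)}|<\infty$. $\mathscr{P}(\mathbb{Q}_p^n)$: measurable $q:\mathbb{Q}_p^n\to(1,\infty)$ with $1<\operatorname{ess\,inf}q\le\operatorname{ess\,sup}q<\infty$.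 $L^{q(\cdot)}$ is normed by $\|f\|_{L^{q(\cdot)}}=\inf\{\eta>0:\int(|f(x)|/\eta)^{q(x)}dx\le1\}$. $\mathscr{B}(\mathbb{Q}_p^n)$ is the set of $q(\cdot)\in\mathscr{P}(\mathbb{Q}_p^n)$ such that the Hardy–Littlewood maximal operator $\mathcal{M}^p(f)(x)=\sup_{\gamma}|B_\gamma(x)|_h^{-1}\int_{B_\gamma(x)}|f|$ is bounded on $L^{q(\cdot)}(\mathbb{Q}_p^n)$. *)

(* Defs.v *)
From HB Require Import structures.
From mathcomp Require Import all_boot all_order all_algebra.
From mathcomp Require Import all_classical all_reals all_analysis.
From mathcomp Require Import measurable_realfun.
Set Implicit Arguments. Unset Strict Implicit. Unset Printing Implicit Defensive.
Import Order.TTheory GRing.Theory Num.Theory.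
Local Open Scope classical_set_scope.
Local Open Scope ring_scope.

(* The p-adic numbers Q_p, represented by their (unique) canonical p-adic  *)
(* expansion  x = sum_{k in Z} a_k p^k  with digits a_k in {0,...,p-1} and *)
(* a_k = 0 for all sufficiently negative k.                               *)
Definition Qp (p : nat) : Type :=
  {a : int -> nat | (forall k, (a k <= p.-1)%N) /\
                    exists N : int, forall k, k < N -> a k = 0%N}.

Definition Qp_digit (p : nat) (x : Qp p) : int -> nat := proj1_sig x.

Lemma Qp_zero_proof (p : nat) :
  (forall k : int, ((fun _ : int => 0%N) k <= p.-1)%N) /\
  exists N : int, forall k, k < N -> (fun _ : int => 0%N) k = 0%N.
Proof. by split=> //; exists 0. Qed.

Definition Qp_zero (p : nat) : Qp p := exist _ (fun _ => 0%N) (Qp_zero_proof p).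

HB.instance Definition _ (p : nat) := gen_eqMixin (Qp p).
HB.instance Definition _ (p : nat) := gen_choiceMixin (Qp p).
HB.instance Definition _ (p : nat) := isPointed.Build (Qp p) (Qp_zero p).

Definition Qpn (p n : nat) : Type := 'I_n -> Qp p.

(* The ball B_gamma(x) = {y : |y - x|_p <= p^gamma}, |.|_p the max-norm.  *)
(* For the p-adic norm one has |y_j - x_j|_p <= p^gamma iff the p-adic    *)
(* expansions of x_j and y_j agree at every index k < -gamma.             *)
Definition ball_p (p n : nat) (g : int) (x : Qpn p n) : set (Qpn p n) :=
  [set y | forall (j : 'I_n) (k : int), k < - g ->
           Qp_digit (y j) k = Qp_digit (x j) k].

Definition balls_p (p n : nat) : set (set (Qpn p n)) :=
  [set B | exists g x, B = ball_p g x].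

(* Q_p^n with its Borel sigma-algebra (generated by the balls). *)
Definition QpnM (p n : nat) := g_sigma_algebraType (@balls_p p n).

(* Haar measure of a ball: |B_gamma(x)|_h = p^(n gamma). *)
Definition vol_p {R : realType} (p n : nat) (g : int) : R :=
  (p%:R : R) ^ (n%:Z * g).

Section Defs.
Context {R : realType} (p n : nat).
Notation T := (QpnM p n).
Variable mu : {measure set T -> \bar R}.

Definition ballM (g : int) (x : T) : set T := ball_p (p:=p) (n:=n) g x.

(* locally integrable: integrable on every ball (balls are compact open and
   every compact set is covered by finitely many balls) *)
Definition loc_integrable (b : T -> R) : Prop :=
  forall g x, mu.-integrable (ballM g x) (EFin \o b).

Definition var_exponent (q : T -> R) : Prop :=
  measurable_fun setT q /\ (forall x, 1 < q x) /\
  exists qm qM : R, 1 < qm /\ {ae mu, forall x, qm <= q x <= qM}.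

(* Luxemburg norm ||f||_{L^{q(.)}} (value +oo if no eta works) *)
Definition lq_norm (q : T -> R) (f : T -> \bar R) : \bar R :=
  ereal_inf [set (eta%:E)%E | eta in [set eta : R | 0 < eta /\
     (\int[mu]_x poweR (`|f x| * (eta^-1)%:E)%E (q x) <= 1)%E]].

Definition HLmax (f : T -> \bar R) (x : T) : \bar R :=
  ereal_sup [set ((vol_p (R:=R) p n g)^-1%:E *
                  \int[mu]_(y in ballM g x) `|f y|)%E | g in [set: int]].

Definition in_B (q : T -> R) : Prop :=
  var_exponent q /\
  exists C : R, 0 < C /\
    forall f : T -> R, measurable_fun [set: T] f ->
      (lq_norm q (EFin \o f) < +oo)%E ->
      (lq_norm q (HLmax (EFin \o f)) <= C%:E * lq_norm q (EFin \o f))%E.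

Definition fracmax (alpha : R) (Bs : set T) (f : T -> R) (x : T) : \bar R :=
  ereal_sup [set ((powR (vol_p (R:=R) p n g) (alpha / n%:R - 1))%:E *
                  \int[mu]_(y in ballM g x) (`|f y|)%:E)%E
            | g in [set g : int | ballM g x `<=` Bs]].

Definition osc_fun (alpha : R) (b : T -> R) (g : int) (x : T) : T -> \bar R :=
  fun y => if `[< ballM g x y >] then
      ((b y)%:E - (powR (vol_p (R:=R) p n g) (- (alpha / n%:R)))%:E
                    * fracmax alpha (ballM g x) b y)%E
    else 0%E.

Definition indic_ball (g : int) (x : T) : T -> \bar R :=
  fun y => (\1_(ballM g x) y)%:E.

Definition ball_avg (b : T -> R) (g : int) (x : T) : R :=
  (vol_p (R:=R) p n g)^-1 * fine (\int[mu]_(y in ballM g x) (b y)%:E).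

Definition in_BMO (b : T -> R) : Prop :=
  loc_integrable b /\
  exists K : R, forall (g : int) (x : T),
    ((vol_p (R:=R) p n g)^-1%:E *
      \int[mu]_(y in ballM g x) (`|b y - ball_avg b g x|)%:E <= K%:E)%E.

End Defs.

(* Main.v *)
Require Import Defs.
From HB Require Import structures.
From mathcomp Require Import all_boot all_order all_algebra.
From mathcomp Require Import all_classical all_reals all_analysis.
From mathcomp Require Import measurable_realfun.
From mathcomp Require Import lra.
Import Order.TTheory GRing.Theory Num.Theory.
Import HBNNSimple.
Local Open Scope classical_set_scope.
Local Open Scope ring_scope.

Section H.
Context {R : realType} (p n : nat).
Notation T := (QpnM p n).

Lemma ballM_eq (g : int) (x y : T) : ballM g x y -> ballM g y = ballM g x.
Proof.
move=> hy; apply/seteqP; split => z /= hz j k hk.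
  by rewrite hz // hy.
by rewrite hz // hy.
Qed.

Lemma ballM_center (g : int) (x : T) : ballM g x x.
Proof. by []. Qed.

Lemma ballM_meas (g : int) (x : T) : measurable (ballM g x).
Proof. by apply: sub_sigma_algebra; exists g, x. Qed.

Variable mu : {measure set T -> \bar R}.

Lemma inner_mono (D : set T) (f g : T -> \bar R) :
  (forall x, D x -> (0 <= f x)%E) -> (forall x, D x -> (f x <= g x)%E) ->
  (\int[mu]_(x in D) f x <= \int[mu]_(x in D) g x)%E.
Proof.
move=> f0 fg.
rewrite (ge0_integralE _ f0) (ge0_integralE _ (fun x Dx => le_trans (f0 x Dx) (fg x Dx))).
apply: ereal_sup_le => _ [h hf <-]; exists h => //= x.
apply: (le_trans (hf x)); rewrite /patch; case: ifP => // /set_mem; exact: fg.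
Qed.
Variable q : T -> R.
Hypothesis hq1 : forall x, 1 < q x.

Local Open Scope ereal_scope.

Lemma poweR_ge0' (x : \bar R) r : 0 <= x -> 0 <= poweR x r.
Proof. by case: x => [x||] //= _; [rewrite lee_fin powR_ge0| case: ifP]. Qed.

Lemma lq_mono (f g : T -> \bar R) : (forall x, `|f x| <= `|g x|) ->
  lq_norm mu q f <= lq_norm mu q g.
Proof.
move=> fg; apply: ereal_inf_le_tmp => _ [eta [eta0 hint] <-]; exists eta => //.
split => //; apply: le_trans hint; apply: inner_mono => y _.
  by apply: poweR_ge0'; rewrite mule_ge0 // lee_fin invr_ge0 ltW.
apply: gt0_ler_poweR; first by rewrite ltW // (lt_trans _ (hq1 y)).
- by rewrite in_itv /= leey mule_ge0 // lee_fin invr_ge0 ltW.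
- by rewrite in_itv /= leey mule_ge0 // lee_fin invr_ge0 ltW.
by apply: lee_wpmul2r => //; rewrite lee_fin invr_ge0 ltW.
Qed.

Lemma lq_ge0 f : 0 <= lq_norm mu q f.
Proof.
by apply: le_ereal_inf_tmp => _ [eta [eta0 _] <-]; rewrite lee_fin ltW.
Qed.
Hypothesis hmu : forall (g : int) (x : T), mu (ballM g x) = (vol_p (R:=R) p n g)%:E.
Local Notation Bl g x := (ballM (p:=p) (n:=n) g x).
Local Notation V g := (vol_p (R:=R) p n g).

Lemma indic_absE g x y (e : R) :
  `|indic_ball (p:=p) (n:=n) g x y| * e%:E = ((\1_(Bl g x) y : R) * e)%:E.
Proof. by rewrite /indic_ball /= ger0_norm. Qed.

Lemma int_cst_ball g x (e : R) : (0 <= e)%R ->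
  \int[mu]_y ((e * \1_(Bl g x) y : R)%:E) = (e * V g)%:E.
Proof.
move=> e0.
under eq_integral do rewrite EFinM.
rewrite ge0_integralZl_EFin //; last first.
  by apply/measurable_EFinP; apply: measurable_indic; exact: ballM_meas.
by rewrite integral_indic // ?setIT ?hmu //; exact: ballM_meas.
Qed.
Hypothesis hp : prime p.
Lemma V_gt0 g : (0 < V g)%R.
Proof. by rewrite /vol_p exprz_gt0 // ltr0n prime_gt0. Qed.

Local Notation N g x := (lq_norm mu q (indic_ball (p:=p) (n:=n) g x)).

Lemma N_fin g x : N g x <= (Num.max 1%R (V g))%:E.
Proof.
set eta := Num.max 1%R (V g).
have eta1 : (1 <= eta)%R by rewrite le_max lexx.
have eta0 : (0 < eta)%R by rewrite (lt_le_trans ltr01).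
apply: ereal_inf_lbound; exists eta => //; split => //.
apply: (@le_trans _ _ (\int[mu]_y ((eta^-1 * \1_(Bl g x) y : R)%:E))).
  apply: inner_mono.
- move=> y _; apply: poweR_ge0'; rewrite mule_ge0 // lee_fin invr_ge0 ltW //.
- move=> y _; rewrite indic_absE poweR_EFin lee_fin.
  have: ((\1_(Bl g x) y : R) * eta^-1 <= eta^-1 * \1_(Bl g x) y)%R.
    by rewrite mulrC.
  apply: le_trans; rewrite indicE; case: (y \in _) => /=.
    rewrite ?mul1r ?mulr1 ?div1r; apply: ge1r_powR; last exact: ltW.
    by rewrite invr_gt0 eta0 /= invf_le1.
  by rewrite mul0r powR0 // gt_eqF // (lt_trans _ (hq1 y)).
rewrite int_cst_ball; last by rewrite invr_ge0 ltW.
rewrite lee_fin.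
by rewrite ler_pdivrMl // mulr1 le_max lexx orbT.
Qed.

Lemma N_pos g x : (Num.min 1%R (V g))%:E <= N g x.
Proof.
apply: le_ereal_inf_tmp => _ [eta [eta0 hint] <-]; rewrite lee_fin.
rewrite leNgt lt_min; apply/negP => /andP[eta1 etaV].
have : ((eta^-1 * V g)%:E <= 1).
  apply: le_trans hint; rewrite -(int_cst_ball g x); last by rewrite invr_ge0 ltW.
  apply: inner_mono.
    by move=> y _; rewrite lee_fin mulr_ge0 // invr_ge0 ltW.
  move=> y _; rewrite indic_absE poweR_EFin lee_fin indicE.
  case: (y \in _) => /=.
    rewrite ?mul1r ?mulr1 ?div1r; apply: le1r_powR; last exact: ltW.
    by rewrite invf_ge1 // ltW.
  by rewrite mul0r mulr0 powR0 // gt_eqF // (lt_trans _ (hq1 y)).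
rewrite lee_fin ler_pdivrMl // mulr1 => /(lt_le_trans etaV).
by rewrite ltxx.
Qed.
Lemma lq_scale_lb g x (c : R) : (0 < c)%R ->
  c%:E * N g x <= lq_norm mu q (fun y => c%:E * indic_ball (p:=p) (n:=n) g x y).
Proof.
move=> c0; apply: le_ereal_inf_tmp => _ [eta [eta0 hint] <-].
have : N g x <= ((eta / c)%R)%:E.
  apply: ereal_inf_lbound; exists (eta / c)%R => //; split; first by rewrite divr_gt0.
  apply: le_trans hint; rewrite le_eqVlt; apply/orP; left; apply/eqP.
  apply: eq_integral => y _; congr poweR.
  rewrite /indic_ball /= -!EFinM normrM (gtr0_norm c0) ger0_norm // invf_div.
  by rewrite !mulrA [(_ * c)%R]mulrC.
move/(lee_wpmul2l (x := c%:E)); rewrite lee_fin ltW // => /(_ isT).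
by rewrite -EFinM mulrC divfK // gt_eqF.
Qed.
Lemma ereal_le_real (a : \bar R) (K : R) : (0 < K)%R -> 0 <= a ->
  (forall c : R, (0 < c)%R -> c%:E <= a -> (c <= K)%R) -> a <= K%:E.
Proof.
move=> K0 a0 H; case: a a0 H => [r||] //= r0 H.
  have [r0'|] := ltP 0%R r; first by rewrite lee_fin H.
  by move=> rle; rewrite lee_fin (le_trans rle) // ltW.
have := H (K + 1)%R (addr_gt0 K0 ltr01) (leey _).
by rewrite gerDl ler10.
Qed.

Lemma N_finE g x : N g x \is a fin_num.
Proof.
rewrite ge0_fin_numE ?lq_ge0 //; apply: le_lt_trans (N_fin g x) _; exact: ltey.
Qed.

Lemma N_real_gt0 g x : (0 < fine (N g x))%R.
Proof.
rewrite -lte_fin fineK ?N_finE //; apply: lt_le_trans (N_pos g x).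
by rewrite lte_fin lt_min ltr01 V_gt0.
Qed.

Variables (CM C alpha : R) (b : T -> R).
Hypothesis hCM : (0 < CM)%R.
Hypothesis hC : (0 < C)%R.
Hypothesis hMb : forall f : T -> R, measurable_fun [set: T] f ->
      (lq_norm mu q (EFin \o f) < +oo)%E ->
      (lq_norm mu q (HLmax mu (EFin \o f)) <= CM%:E * lq_norm mu q (EFin \o f))%E.
Hypothesis hbound : forall (g : int) (x : T),
     (lq_norm mu q (osc_fun mu alpha b g x) <= C%:E * N g x)%E.

Lemma osc_int_bound g x :
  \int[mu]_(y in Bl g x) `|osc_fun mu alpha b g x y| <= (CM * C * V g)%:E.
Proof.
set osc := osc_fun mu alpha b g x.
rewrite ge0_integralE //; apply: ge_ereal_sup => _ [h hh <-].
have h0 y : (0 <= h y)%R by [].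
have hoff y : ~ Bl g x y -> h y = 0%R.
  move=> ny; apply/eqP; rewrite eq_le h0 andbT -lee_fin.
  by have := hh y; rewrite /patch memNset.
have hle y : `|(h y)%:E| <= `|osc y|.
  rewrite gee0_abs ?lee_fin //.
  have [yB|yB] := pselect (Bl g x y).
    by have := hh y; rewrite /patch mem_set.
  by rewrite hoff // abse_ge0.
have lqh : lq_norm mu q (EFin \o h) <= C%:E * N g x.
  by apply: le_trans (hbound g x); apply: lq_mono => y; exact: hle.
have lqhfin : lq_norm mu q (EFin \o h) < +oo.
  apply: le_lt_trans lqh _; rewrite -(fineK (N_finE g x)) -EFinM; exact: ltey.
have HM := @hMb h (measurable_funP h) lqhfin.
set I := \int[mu]_(y in Bl g x) (h y)%:E.
have I0 : 0 <= I by apply: integral_ge0 => y _; rewrite lee_fin.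
have key : (V g)^-1%:E * I <= (CM * C)%:E.
  apply: ereal_le_real; first by rewrite mulr_gt0.
    by rewrite mule_ge0 // lee_fin invr_ge0 ltW // V_gt0.
  move=> c c0 ca.
  have hl : lq_norm mu q (fun y => c%:E * indic_ball (p:=p) (n:=n) g x y) <=
            lq_norm mu q (HLmax mu (EFin \o h)).
    apply: lq_mono => y; rewrite /indic_ball indicE.
    case: (boolP (y \in Bl g x)) => [/set_mem yB|_]; last first.
      by have -> : (false%:R : R) = 0%R by []; rewrite mule0 abse0 abse_ge0.
    have -> : (true%:R : R) = 1%R by [].
    rewrite mule1 gee0_abs; last by rewrite lee_fin ltW.
    apply: (le_trans ca); apply: (le_trans _ (lee_abs _)).
    apply: ereal_sup_ubound; exists g => //=; rewrite (ballM_eq _ _ _ yB).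
    congr (_ * _); apply: eq_integral => z _ /=; by rewrite ger0_norm.
  have := le_trans (lq_scale_lb g x c c0) (le_trans hl (le_trans HM
      (lee_wpmul2l (ltW _) lqh))).
  rewrite lte_fin hCM => /(_ isT).
  rewrite -(fineK (N_finE g x)) muleA -!EFinM lee_fin ler_pM2r ?N_real_gt0 //.
have -> : sintegral mu h = I.
  have := integral_nnsfun mu measurableT h; rewrite patch_setT => <-.
  rewrite /I [RHS]integral_mkcond.
  apply: eq_integral => y _; rewrite /patch; case: ifP => // /negbT yB.
  by rewrite hoff //; move: yB; rewrite notin_setE.
have := lee_wpmul2l (x := (V g)%:E) _ key.
rewrite lee_fin ltW ?V_gt0 // => /(_ isT).
rewrite muleA -EFinM divff ?gt_eqF ?V_gt0 // mul1e.
by rewrite -EFinM mulrC.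
Qed.
End H.

Lemma cst_integrable {R : realType} (p n : nat) (mu : {measure set (QpnM p n) -> \bar R})
  (B : set (QpnM p n)) (a : R) : measurable B -> (mu B < +oo)%E ->
  mu.-integrable B (fun _ => a%:E).
Proof.
move=> mB muB; apply/integrableP; split; first exact: measurable_cst.
rewrite (integral_cst mu mB `|a%:E|%E).
by apply: lte_mul_pinfty => //; rewrite ?abse_ge0 //= ltey.
Qed.

Theorem mainTheorem12 (R : realType) (p n : nat) (hp : prime p)
  (mu : {measure set (QpnM p n) -> \bar R})
  (hmu : forall (g : int) (x : QpnM p n),
           mu (ballM g x) = (vol_p (R:=R) p n g)%:E)
  (alpha : R) (halpha : 0 < alpha < n%:R)
  (b : QpnM p n -> R) (hb : loc_integrable mu b)
  (q : QpnM p n -> R) (hq : in_B mu q)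
  (C : R) (hC : 0 < C)
  (hbound : forall (g : int) (x : QpnM p n),
     (lq_norm mu q (osc_fun mu alpha b g x)
        <= C%:E * lq_norm mu q (indic_ball g x))%E) :
  in_BMO mu b.
Proof.
case: hq => [[_ [hq1 _]] [CM [CM0 hM]]].
split => //.
exists (2 * (CM * C))%R => g x.
set B := ballM g x.
have mB : measurable B := ballM_meas p n g x.
have ib := hb g x.
move/integrableP: (ib) => [mb Jlt].
set Vg := vol_p (R:=R) p n g.
have V0 : (0 < Vg)%R := V_gt0 (R:=R) p n hp g.
set Ib := (\int[mu]_(y in B) (b y)%:E)%E.
have Ibfin : Ib \is a fin_num := integrable_fin_num mB ib.
set J := (\int[mu]_(y in B) `|(EFin \o b) y|)%E.
have Jfin : J \is a fin_num.
  by rewrite ge0_fin_numE // integral_ge0 // => y _; rewrite abse_ge0.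
set a := ball_avg mu b g x.
have aJ : (a <= Vg^-1 * fine J)%R.
  rewrite /a /ball_avg; apply: ler_wpM2l; first by rewrite invr_ge0 ltW.
  rewrite -lee_fin !fineK //; apply: le_trans (lee_abs _) _.
  exact: le_abse_integral.
have PQ : (Vg `^ (- (alpha / n%:R)) * Vg `^ (alpha / n%:R - 1) = Vg^-1)%R.
  rewrite -powRD; last by apply/implyP => _; rewrite gt_eqF.
  by rewrite addrA addNr add0r powR_inv1 // ltW.
have pt : forall y, B y -> ((a - b y)%:E <= `|osc_fun mu alpha b g x y|)%E.
  move=> y By.
  have fmge : ((Vg `^ (alpha / n%:R - 1) * fine J)%:E <= fracmax mu alpha B b y)%E.
    apply: ereal_sup_ubound; exists g => /=; first by rewrite (@ballM_eq p n g x y By).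
    by rewrite (@ballM_eq p n g x y By) EFinM fineK.
  rewrite /osc_fun asboolT //.
  have P0 : (0 < Vg `^ (- (alpha / n%:R)))%R by rewrite powR_gt0.
  move: fmge; case E: (fracmax mu alpha B b y) => [r||] fmge.
  - rewrite -EFinM -EFinB /= lee_fin ler_normr; apply/orP; right.
    rewrite opprB lerD2r; apply: (le_trans aJ); rewrite -PQ -mulrA.
    by apply: ler_wpM2l; [exact: ltW | rewrite -lee_fin].
  - by rewrite gt0_muley ?lte_fin //= leey.
  - by move: fmge; rewrite leeNy_eq.
set F := fun y => ((b y)%:E - a%:E)%E.
have icst : mu.-integrable B (fun _ => a%:E).
  by apply: cst_integrable => //; rewrite /B hmu ltey.
have iF : mu.-integrable B F := integrableB mB ib icst.
have mF : measurable_fun B F by move/integrableP: iF => [].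
have F0 : (\int[mu]_(y in B) F y = 0)%E.
  rewrite /F (integralB_EFin mB ib icst).
  rewrite (_ : (\int[mu]_(y in B) (cst a y)%:E)%E = (a%:E * mu B)%E); last first.
    exact: (integral_cst mu mB a%:E).
  rewrite /B hmu -EFinM /a /ball_avg -/Vg -/Ib mulrC mulrA divff ?gt_eqF //.
  by rewrite mul1r fineK // subee.
set X := (\int[mu]_(y in B) F^\- y)%E.
have Xfin : X \is a fin_num.
  rewrite ge0_fin_numE; first exact: integral_funeneg_lt_pinfty.
  by apply: integral_ge0 => y _; exact: funeneg_ge0.
have Pfin : (\int[mu]_(y in B) F^\+ y)%E \is a fin_num.
  rewrite ge0_fin_numE; first exact: integral_funepos_lt_pinfty.
  by apply: integral_ge0 => y _; exact: funepos_ge0.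
have PX : (\int[mu]_(y in B) F^\+ y)%E = X.
  by rewrite -[LHS](subeK _ Xfin) -integralE F0 add0e.
have absF : (\int[mu]_(y in B) (`|b y - a|)%:E)%E = (X + X)%E.
  rewrite -{1}PX -ge0_integralD //;
    try (by move=> y _; exact: funeneg_ge0);
    try (by move=> y _; exact: funepos_ge0);
    try (by apply: measurable_funeneg); try (by apply: measurable_funepos).
  apply: eq_integral => y _.
  have := congr1 (fun f => f y) (fune_abse F); rewrite /= => <-.
  by [].
have Xle : (X <= (CM * C * Vg)%:E)%E.
  apply: le_trans (@osc_int_bound R p n mu q hq1 hmu hp CM C alpha b CM0 hC hM hbound g x).
  apply: inner_mono => y By; first exact: funeneg_ge0.
  rewrite funenegE ge_max abse_ge0 andbT /F -EFinB -EFinN opprB.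
  exact: pt.
rewrite absF -(fineK Xfin) -EFinD -EFinM lee_fin.
move: Xle; rewrite -(fineK Xfin) lee_fin => Xle.
rewrite /= mulrC ler_pdivrMr //.
move: Xle; rewrite /=; set fx := fine X => Xle.
rewrite -mulrA; lra.
Qed.
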